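(* Let $X$ be an admissible complete CAT(1) space and $T\colon X\to X$ a firmly vicinal mapping. If $\mathrm{Fix}(T)$ is nonempty, then for each $x\in X$ the sequence $\{T^nx\}$ is $\Delta$-convergent to an element of $\mathrm{Fix}(T)$.
   Context: A CAT(1) space is a $\pi$-geodesic metric space in which every geodesic triangle of perimeter $<2\pi$ satisfies the CAT(1) comparison inequality relative to comparison triangles in the unit sphere $\mathbb S^2$; it is admissible if $d(v,v')<\pi/2$ for all $v,v'$. The asymptotic center of $\{x_n\}$ is $\mathrm{AC}(\{x_n\})=\{z:\limsup_n d(x_n,z)=\inf_{y}\limsup_n d(x_n,y)\}$; $\{x_n\}$ is $\Delta$-convergent to $p$ if $\mathrm{AC}(\{x_{n_i}\})=\{p\}$ for every subsequence $\{x_{n_i}\}$. With $C_z=\cos d(Tz,z)$, $T$ is firmly vicinal if for all $x,y\in X$: $\bigl(C_x^2(1+C_y^2)C_y+C_y^2(1+C_x^2)C_x\bigr)\cos d(Tx,Ty)\ge C_x^2(1+C_y^2)\cos d(Tx,y)+C_y^2(1+C_x^2)\cos d(Ty,x)$. *)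

(* Defs.v *)
From Stdlib Require Import Reals Lra.
Open Scope R_scope.

Definition is_metric {X : Type} (d : X -> X -> R) : Prop :=
  (forall x y, 0 <= d x y) /\
  (forall x y, d x y = 0 <-> x = y) /\
  (forall x y, d x y = d y x) /\
  (forall x y z, d x z <= d x y + d y z).

Definition is_geodesic {X : Type} (d : X -> X -> R) (c : R -> X) (x y : X) : Prop :=
  c 0 = x /\ c (d x y) = y /\
  forall s t, 0 <= s <= d x y -> 0 <= t <= d x y -> d (c s) (c t) = Rabs (s - t).

Definition pi_geodesic {X : Type} (d : X -> X -> R) : Prop :=
  forall x y, d x y < PI -> exists c, is_geodesic d c x y.

Definition R3 : Type := (R * R * R)%type.
Definition dot3 (a b : R3) : R :=
  let '(a1, a2, a3) := a in let '(b1, b2, b3) := b in a1 * b1 + a2 * b2 + a3 * b3.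
Definition on_S2 (a : R3) : Prop := dot3 a a = 1.
Definition dS2 (a b : R3) : R := acos (dot3 a b).

(** A point [u] lies on the geodesic triangle side [c] (geodesic from [a] to [b]),
    and [ub] is its comparison point on the side [[ab, bb]] of the comparison
    triangle in S^2, i.e. the point of S^2 with dS2 ab ub = t and dS2 ub bb = d a b - t. *)
Definition side_point {X : Type} (d : X -> X -> R) (c : R -> X) (a b : X)
    (ab bb : R3) (u : X) (ub : R3) : Prop :=
  exists t, 0 <= t <= d a b /\ u = c t /\ on_S2 ub /\
    dS2 ab ub = t /\ dS2 ub bb = d a b - t.

Definition CAT1_ineq {X : Type} (d : X -> X -> R) : Prop :=
  forall (x1 x2 x3 : X) (c12 c23 c31 : R -> X),
    is_geodesic d c12 x1 x2 -> is_geodesic d c23 x2 x3 -> is_geodesic d c31 x3 x1 ->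
    d x1 x2 + d x2 x3 + d x3 x1 < 2 * PI ->
  forall (y1 y2 y3 : R3),
    on_S2 y1 -> on_S2 y2 -> on_S2 y3 ->
    dS2 y1 y2 = d x1 x2 -> dS2 y2 y3 = d x2 x3 -> dS2 y3 y1 = d x3 x1 ->
  let on_tri u ub :=
    side_point d c12 x1 x2 y1 y2 u ub \/
    side_point d c23 x2 x3 y2 y3 u ub \/
    side_point d c31 x3 x1 y3 y1 u ub in
  forall u ub v vb, on_tri u ub -> on_tri v vb -> d u v <= dS2 ub vb.

Definition CAT1_space {X : Type} (d : X -> X -> R) : Prop :=
  is_metric d /\ pi_geodesic d /\ CAT1_ineq d.

Definition admissible {X : Type} (d : X -> X -> R) : Prop :=
  forall v v', d v v' < PI / 2.

Definition complete_metric {X : Type} (d : X -> X -> R) : Prop :=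
  forall x : nat -> X,
    (forall eps, eps > 0 -> exists N, forall m n, (m >= N)%nat -> (n >= N)%nat ->
        d (x m) (x n) < eps) ->
    exists l, forall eps, eps > 0 -> exists N, forall n, (n >= N)%nat -> d (x n) l < eps.

Definition is_limsup (a : nat -> R) (L : R) : Prop :=
  forall eps, eps > 0 ->
    (exists N, forall n, (n >= N)%nat -> a n < L + eps) /\
    (forall N, exists n, (n >= N)%nat /\ L - eps < a n).

Definition in_AC {X : Type} (d : X -> X -> R) (x : nat -> X) (z : X) : Prop :=
  exists Lz, is_limsup (fun n => d (x n) z) Lz /\
    forall y Ly, is_limsup (fun n => d (x n) y) Ly -> Lz <= Ly.

Definition Delta_converges {X : Type} (d : X -> X -> R) (x : nat -> X) (p : X) : Prop :=
  forall phi : nat -> nat, (forall i, (phi i < phi (S i))%nat) ->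
    forall z, in_AC d (fun i => x (phi i)) z <-> z = p.

Definition firmly_vicinal {X : Type} (d : X -> X -> R) (T : X -> X) : Prop :=
  forall x y,
    let Cx := cos (d (T x) x) in
    let Cy := cos (d (T y) y) in
    (Cx ^ 2 * (1 + Cy ^ 2) * Cy + Cy ^ 2 * (1 + Cx ^ 2) * Cx) * cos (d (T x) (T y))
    >= Cx ^ 2 * (1 + Cy ^ 2) * cos (d (T x) y) + Cy ^ 2 * (1 + Cx ^ 2) * cos (d (T y) x).

(* Main.v *)
Require Import Defs.
From Stdlib Require Import Reals Lra Psatz ClassicalEpsilon Classical.
Open Scope R_scope.

Lemma cos_lip u v : Rabs (cos u - cos v) <= Rabs (u - v).
Proof.
  destruct (MVT_abs cos (fun c => - sin c) v u) as [c [H _]].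
  { intros c _. apply derivable_pt_lim_cos. }
  rewrite H. rewrite <- (Rmult_1_l (Rabs (u - v))) at 2.
  apply Rmult_le_compat_r; [apply Rabs_pos|].
  rewrite Rabs_Ropp. apply Rabs_le. apply SIN_bound.
Qed.

Lemma cos_lip' u v : cos v >= cos u - Rabs (u - v).
Proof. pose proof (cos_lip u v) as H. pose proof (Rle_abs (cos u - cos v)). lra. Qed.

Lemma cos_le_mono u v : 0 <= u -> u <= v -> v <= PI -> cos v <= cos u.
Proof.
  intros. destruct (Req_dec u v). subst; lra.
  left. apply cos_decreasing_1; lra.
Qed.

Lemma cos_le_inv u v : 0 <= u <= PI -> 0 <= v <= PI -> cos u <= cos v -> v <= u.
Proof.
  intros. destruct (Rle_or_lt v u); auto.
  pose proof (cos_decreasing_1 u v ltac:(lra) ltac:(lra) ltac:(lra) ltac:(lra) H2). lra.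
Qed.

Lemma one_minus_cos t : 0 <= t <= PI / 2 -> t^2 / 3 <= 1 - cos t.
Proof.
  intros Ht. pose proof (cos_bound t 0 ltac:(pose proof PI_RGT_0; lra) ltac:(lra)) as [_ H].
  unfold cos_approx in H. simpl in H. unfold cos_term in H. simpl in H.
  pose proof PI2_1. pose proof PI_4.
  assert (t <= 2) by lra.
  assert (t*t <= 4) by nra. assert (t^4 <= 4 * t^2) by (replace (t^4) with ((t*t)*(t*t)) by ring; replace (t^2) with (t*t) by ring; apply Rmult_le_compat_r; nra).
  replace (1 * (1 / 1) + -1 * 1 * (t * (t * 1) / (1 + 1)) + -1 * (-1 * 1) * (t * (t * (t * (t * 1))) / (1 + 1 + 1 + 1 + 1 + 1 + 1 + 1 + 1 + 1 + 1 + 1 + 1 + 1 + 1 + 1 + 1 + 1 + 1 + 1 + 1 + 1 + 1 + 1))) with (1 - t^2/2 + t^4/24) in H by field. nra.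
Qed.

Lemma small_of_cos t e : 0 <= t <= PI / 2 -> 0 < e -> 1 - cos t <= e^2/3 -> t <= e.
Proof.
  intros. pose proof (one_minus_cos t H). nra.
Qed.

Lemma midpoint (X : Type) (d : X -> X -> R) :
  CAT1_space d -> admissible d -> forall y p, y <> p ->
  exists m, forall x, cos (d x m) * (2 * cos (d y p / 2)) >= cos (d x y) + cos (d x p).
Proof.
  intros [[Hpos [Hzero [Hsym Htri]]] [Hgeo Hcat]] Had y p Hyp.
  pose proof PI_RGT_0 as Hpi.
  set (a := d y p).
  assert (Ha0 : 0 < a).
  { destruct (Hpos y p) as [H|H]; auto. exfalso. apply Hyp. apply Hzero. unfold a; lra. }
  assert (Ha1 : a < PI / 2) by apply Had.
  destruct (Hgeo y p ltac:(unfold a in *; lra)) as [c Hc].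
  exists (c (a / 2)). intros x.
  destruct (Hgeo p x ltac:(pose proof (Had p x); lra)) as [c2 Hc2].
  destruct (Hgeo x y ltac:(pose proof (Had x y); lra)) as [c3 Hc3].
  set (b := d x y). set (e := d p x).
  assert (Hb : 0 <= b < PI/2) by (split; [apply Hpos|apply Had]).
  assert (He : 0 <= e < PI/2) by (split; [apply Hpos|apply Had]).
  set (h := cos (a/2)). set (s := sin (a/2)).
  assert (Hh : 0 < h) by (apply cos_gt_0; lra).
  assert (Hs : 0 < s) by (apply sin_gt_0; lra).
  assert (Hhs : h*h + s*s = 1) by (pose proof (sin2_cos2 (a/2)); unfold Rsqr in *; unfold h, s; lra).
  assert (Hsa : sin a = 2 * s * h) by (unfold s, h; rewrite <- sin_2a; f_equal; lra).
  assert (Hca : cos a = 2 * h * h - 1) by (unfold h; rewrite <- cos_2a_cos; f_equal; lra).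
  set (al := cos b). set (c2' := cos e).
  set (be := (c2' - al * cos a) / sin a).
  assert (Hsapos : 0 < sin a) by (rewrite Hsa; nra).
  assert (Hbe : sin a * be = c2' - al * cos a) by (unfold be; field; lra).
  assert (T1 : e <= a + b).
  { unfold e, a, b. pose proof (Htri p y x). pose proof (Hsym p y); pose proof (Hsym y x); pose proof (Hsym x p). lra. }
  assert (T2 : a <= b + e).
  { unfold e, a, b. pose proof (Htri y x p). pose proof (Hsym p y); pose proof (Hsym y x); pose proof (Hsym x p). lra. }
  assert (T3 : b <= e + a).
  { unfold e, a, b. pose proof (Htri x p y). pose proof (Hsym p y); pose proof (Hsym y x); pose proof (Hsym x p). lra. }
  assert (C1 : cos (a + b) <= c2') by (unfold c2'; apply cos_le_mono; lra).
  assert (C2 : c2' <= cos (a - b)).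
  { destruct (Rle_or_lt b a).
    - unfold c2'; apply cos_le_mono; lra.
    - rewrite <- cos_neg. replace (- (a - b)) with (b - a) by ring.
      unfold c2'; apply cos_le_mono; lra. }
  rewrite cos_plus in C1. rewrite cos_minus in C2.
  assert (Hsb : 0 <= sin b) by (apply sin_ge_0; lra).
  assert (Hsb2 : sin b * sin b = 1 - al * al) by (pose proof (sin2_cos2 b); unfold Rsqr in *; unfold al; lra).
  fold al in C1, C2.
  assert (Hbe2 : be * be <= 1 - al * al).
  { assert (Hx : (sin a * be) * (sin a * be) <= (sin a * sin b) * (sin a * sin b)).
    { rewrite Hbe. assert (0 <= sin a * sin b) by nra. nra. }
    rewrite <- Hsb2. apply (Rmult_le_reg_l (sin a * sin a)); [nra|].
    replace (sin a * sin a * (be * be)) with ((sin a * be) * (sin a * be)) by ring.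
    replace (sin a * sin a * (sin b * sin b)) with ((sin a * sin b) * (sin a * sin b)) by ring. exact Hx. }
  set (ga := sqrt (1 - al*al - be*be)).
  assert (Hga : ga * ga = 1 - al*al - be*be) by (apply sqrt_sqrt; lra).
  set (y1 := (1, 0, 0) : R3).
  set (y2 := (cos a, sin a, 0) : R3).
  set (y3 := (al, be, ga) : R3).
  set (mb := (h, s, 0) : R3).
  assert (Ho1 : on_S2 y1) by (unfold on_S2, y1, dot3; lra).
  assert (Ho2 : on_S2 y2) by (unfold on_S2, y2, dot3; pose proof (sin2_cos2 a); unfold Rsqr in *; lra).
  assert (Ho3 : on_S2 y3) by (unfold on_S2, y3, dot3; lra).
  assert (Hom : on_S2 mb) by (unfold on_S2, mb, dot3; lra).
  assert (D12 : dS2 y1 y2 = d y p).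
  { unfold dS2, y1, y2, dot3. replace (1 * cos a + 0 * sin a + 0 * 0) with (cos a) by ring.
    apply acos_cos. fold a. lra. }
  assert (D23 : dS2 y2 y3 = d p x).
  { unfold dS2, y2, y3, dot3. replace (cos a * al + sin a * be + 0 * ga) with (cos e) by (unfold c2' in Hbe; lra).
    apply acos_cos. fold e. lra. }
  assert (D31 : dS2 y3 y1 = d x y).
  { unfold dS2, y3, y1, dot3. replace (al * 1 + be * 0 + ga * 0) with (cos b) by (unfold al; ring).
    apply acos_cos. fold b. lra. }
  assert (Hper : d y p + d p x + d x y < 2 * PI).
  { pose proof (Had y p); pose proof (Had p x); pose proof (Had x y). lra. }
  pose proof (Hcat y p x c c2 c3 Hc Hc2 Hc3 Hper y1 y2 y3 Ho1 Ho2 Ho3 D12 D23 D31) as H.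
  cbv zeta in H.
  specialize (H (c (a/2)) mb x y3).
  destruct Hc as [Hc0 [Hca' _]]. destruct Hc3 as [Hc30 _].
  assert (Hm : side_point d c y p y1 y2 (c (a / 2)) mb).
  { exists (a/2). split; [fold a; lra|]. split; auto. split; auto. split.
    - unfold dS2, y1, mb, dot3. replace (1 * h + 0 * s + 0 * 0) with (cos (a/2)) by (unfold h; ring).
      apply acos_cos; lra.
    - unfold dS2, mb, y2, dot3. replace (h * cos a + s * sin a + 0 * 0) with (cos (a - a/2)).
      + fold a. apply acos_cos; lra.
      + rewrite cos_minus. fold h s. ring. }
  assert (Hx : side_point d c3 x y y3 y1 x y3).
  { exists 0. split; [fold b; lra|]. split; auto. split; auto. split.
    - unfold dS2. unfold on_S2 in Ho3. rewrite Ho3. apply acos_1.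
    - rewrite D31. ring. }
  specialize (H (or_introl Hm) (or_intror (or_intror Hx))).
  unfold dS2, mb, y3, dot3 in H.
  set (D := h * al + s * be + 0 * ga) in H.
  assert (HD : D * D <= 1).
  { unfold D. assert (E: (h * al + s * be + 0 * ga) * (h * al + s * be + 0 * ga) = (h*h+s*s)*(al*al+be*be) - (h*be - s*al)*(h*be-s*al)) by ring.
    rewrite E, Hhs. pose proof (Rle_0_sqr (h*be - s*al)). unfold Rsqr in *. lra. }
  assert (HD1 : -1 <= D <= 1) by nra.
  assert (Hcm : D <= cos (d (c (a/2)) x)).
  { rewrite <- (cos_acos D HD1). apply cos_le_mono; auto. pose proof (acos_bound D); lra. }
  assert (Hkey : 2 * h * D = al + c2').
  { unfold D. replace (2 * h * (h * al + s * be + 0 * ga)) with (2*h*h*al + sin a * be) by (rewrite Hsa; ring).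
    rewrite Hbe, Hca. ring. }
  rewrite (Hsym x (c (a/2))). fold h. unfold al, b, c2', e in Hkey.
  rewrite (Hsym x p). unfold al, b. nra.
Qed.
From Stdlib Require Import ZArith Lia.
From Coquelicot Require Lim_seq Rbar Rcomplements.

Lemma arch_nat r : exists N : nat, r < INR N.
Proof.
  destruct (archimed r) as [H1 _].
  destruct (Z_lt_le_dec (up r) 0) as [Hl|Hl].
  - exists 0%nat. simpl. apply IZR_lt in Hl. lra.
  - exists (Z.to_nat (up r)). rewrite INR_IZR_INZ. rewrite Z2Nat.id; [lra|lia].
Qed.

Lemma limsup_exists (a : nat -> R) (B : R) :
  (forall n, 0 <= a n <= B) -> exists L, is_limsup a L.
Proof.
  intros Hb. destruct (Lim_seq.ex_LimSup_seq a) as [l Hl].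
  destruct l as [l| |]; simpl in Hl.
  - exists l. intros eps He. specialize (Hl (mkposreal eps He)). simpl in Hl.
    destruct Hl as [H1 [N H2]]. split.
    + exists N. intros n Hn. apply H2. lia.
    + intros N'. destruct (H1 N') as [n [Hn Hn']]. exists n. split; [lia|lra].
  - exfalso. destruct (Hl B 0%nat) as [n [_ Hn]]. specialize (Hb n). lra.
  - exfalso. destruct (Hl 0) as [N Hn]. specialize (Hn N (le_n N)). specialize (Hb N). lra.
Qed.

Lemma limsup_range (a : nat -> R) L B : (forall n, 0 <= a n <= B) -> is_limsup a L -> 0 <= L <= B.
Proof.
  intros Hb HL. split.
  - destruct (Rle_or_lt 0 L); auto. exfalso.
    destruct (HL (-L) ltac:(lra)) as [[N HN] _]. specialize (HN N (le_n N)). specialize (Hb N). lra.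
  - destruct (Rle_or_lt L B); auto. exfalso.
    destruct (HL (L - B) ltac:(lra)) as [_ HF]. destruct (HF 0%nat) as [n [_ Hn]]. specialize (Hb n). lra.
Qed.

Lemma Lcos1 (a : nat -> R) L : (forall n, 0 <= a n <= PI/2) -> is_limsup a L ->
  forall eps, eps > 0 -> exists N, forall n, (n >= N)%nat -> cos (a n) >= cos L - eps.
Proof.
  intros Hb HL eps He. pose proof (limsup_range a L _ Hb HL) as HR.
  pose proof PI2_1. pose proof PI_RGT_0.
  set (e := Rmin eps 1). assert (0 < e /\ e <= eps /\ e <= 1) by (unfold e; split; [apply Rmin_glb_lt|split;[apply Rmin_l|apply Rmin_r]]; lra).
  destruct (HL e ltac:(lra)) as [[N HN] _]. exists N. intros n Hn. specialize (HN n Hn).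
  specialize (Hb n).
  pose proof (cos_le_mono (a n) (L + e) ltac:(lra) ltac:(lra) ltac:(lra)).
  pose proof (cos_lip' L (L + e)). replace (L - (L + e)) with (- e) in H3 by ring.
  rewrite Rabs_Ropp, Rabs_pos_eq in H3 by lra. lra.
Qed.

Lemma Lcos2 (a : nat -> R) L : (forall n, 0 <= a n <= PI/2) -> is_limsup a L ->
  forall eps, eps > 0 -> forall N, exists n, (n >= N)%nat /\ cos (a n) <= cos L + eps.
Proof.
  intros Hb HL eps He N. pose proof (limsup_range a L _ Hb HL) as HR.
  pose proof PI2_1. pose proof PI_RGT_0.
  destruct (HL eps He) as [_ HF]. destruct (HF N) as [n [Hn Hn']]. exists n. split; auto.
  specialize (Hb n).
  destruct (Rle_or_lt 0 (L - eps)).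
  - pose proof (cos_le_mono (L - eps) (a n) ltac:(lra) ltac:(lra) ltac:(lra)).
    pose proof (cos_lip' (L - eps) L). replace (L - eps - L) with (- eps) in H3 by ring.
    pose proof (cos_lip' L (L - eps)). replace (L - (L - eps)) with eps in H4 by ring.
    rewrite Rabs_pos_eq in H4 by lra. 
    pose proof (cos_lip' (L - eps) L). rewrite Rabs_Ropp, Rabs_pos_eq in H3 by lra. lra.
  - pose proof (cos_lip' 0 L). rewrite cos_0 in H2. replace (0 - L) with (- L) in H2 by ring.
    rewrite Rabs_Ropp, Rabs_pos_eq in H2 by lra. pose proof (COS_bound (a n)). lra.
Qed.

Lemma Lconclude (a : nat -> R) L al : (forall n, 0 <= a n <= PI/2) -> is_limsup a L ->
  (forall eps, eps > 0 -> exists N, forall n, (n >= N)%nat -> cos (a n) >= al - eps) ->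
  cos L >= al.
Proof.
  intros Hb HL H. destruct (Rle_or_lt al (cos L)); [lra|]. exfalso.
  set (e := (al - cos L)/4).
  destruct (H e ltac:(unfold e; lra)) as [N HN].
  destruct (Lcos2 a L Hb HL e ltac:(unfold e; lra) N) as [n [Hn Hn']].
  specialize (HN n Hn). unfold e in *. lra.
Qed.

Lemma dbound (X : Type) (d : X -> X -> R) : is_metric d -> admissible d ->
  forall u v, 0 <= d u v <= PI/2.
Proof. intros [Hp _] Ha u v. split; [apply Hp|left; apply Ha]. Qed.

Lemma LipL (X : Type) (d : X -> X -> R) (s : nat -> X) : is_metric d -> admissible d ->
  forall y z Ly Lz, is_limsup (fun n => d (s n) y) Ly -> is_limsup (fun n => d (s n) z) Lz ->
  cos Lz >= cos Ly - d y z.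
Proof.
  intros Hm Ha y z Ly Lz Hy Hz. pose proof (dbound X d Hm Ha) as Hb.
  destruct Hm as [Hp [H0 [Hs Ht]]].
  apply (Lconclude _ Lz _ (fun n => Hb _ _) Hz).
  intros eps He. destruct (Lcos1 _ Ly (fun n => Hb _ _) Hy eps He) as [N HN].
  exists N. intros n Hn. specialize (HN n Hn). simpl in *.
  pose proof (cos_lip' (d (s n) y) (d (s n) z)).
  assert (Rabs (d (s n) y - d (s n) z) <= d y z).
  { apply Rabs_le. pose proof (Ht (s n) y z). pose proof (Ht (s n) z y). pose proof (Hs z y). lra. }
  lra.
Qed.

Lemma MidL (X : Type) (d : X -> X -> R) (s : nat -> X) : CAT1_space d -> admissible d ->
  forall y p, y <> p -> exists m, forall Ly Lp Lm,
  is_limsup (fun n => d (s n) y) Ly -> is_limsup (fun n => d (s n) p) Lp ->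
  is_limsup (fun n => d (s n) m) Lm ->
  cos Lm * (2 * cos (d y p / 2)) >= cos Ly + cos Lp.
Proof.
  intros HC Ha y p Hyp. destruct (midpoint X d HC Ha y p Hyp) as [m Hm].
  exists m. intros Ly Lp Lm Hy Hp Hmm.
  pose proof (dbound X d (proj1 HC) Ha) as Hb.
  set (h := cos (d y p / 2)).
  assert (Hh : 0 < h). { unfold h. pose proof (Hb y p). apply cos_gt_0; pose proof PI_RGT_0; lra. }
  assert (cos Lm >= (cos Ly + cos Lp) / (2 * h)).
  { apply (Lconclude _ Lm _ (fun n => Hb _ _) Hmm).
    intros eps He.
    destruct (Lcos1 _ Ly (fun n => Hb _ _) Hy (eps * h) ltac:(nra)) as [N1 HN1].
    destruct (Lcos1 _ Lp (fun n => Hb _ _) Hp (eps * h) ltac:(nra)) as [N2 HN2].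
    exists (N1 + N2)%nat. intros n Hn. specialize (HN1 n ltac:(lia)). specialize (HN2 n ltac:(lia)).
    specialize (Hm (s n)). simpl in *. fold h in Hm.
    apply Rle_ge. apply (Rmult_le_reg_r (2 * h)); [lra|].
    replace (((cos Ly + cos Lp) / (2 * h) - eps) * (2 * h)) with (cos Ly + cos Lp - 2 * (eps * h)) by (field; lra).
    lra. }
  apply Rle_ge. replace (cos Ly + cos Lp) with ((cos Ly + cos Lp) / (2 * h) * (2 * h)) by (field; lra).
  apply Rmult_le_compat_r; lra.
Qed.

Lemma AC_unique (X : Type) (d : X -> X -> R) (s : nat -> X) : CAT1_space d -> admissible d ->
  forall z z' L, is_limsup (fun n => d (s n) z) L -> is_limsup (fun n => d (s n) z') L ->
  L < PI/2 -> (forall y Ly, is_limsup (fun n => d (s n) y) Ly -> L <= Ly) -> z = z'.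
Proof.
  intros HC Ha z z' L Hz Hz' HL Hmin.
  destruct (classic (z = z')) as [|Hne]; auto. exfalso.
  pose proof (dbound X d (proj1 HC) Ha) as Hb.
  destruct (MidL X d s HC Ha z z' Hne) as [m Hm].
  destruct (limsup_exists (fun n => d (s n) m) (PI/2) (fun n => Hb _ _)) as [Lm HLm].
  specialize (Hm L L Lm Hz Hz' HLm).
  pose proof (Hmin m Lm HLm).
  pose proof (limsup_range _ _ _ (fun n => Hb _ _) HLm).
  pose proof (limsup_range _ _ _ (fun n => Hb _ _) Hz).
  destruct HC as [[Hp [Hz0 _]] _].
  assert (Ha0 : 0 < d z z').
  { destruct (Hp z z'); auto. exfalso. apply Hne. apply Hz0. lra. }
  pose proof (Hb z z').
  assert (Hh : cos (d z z' / 2) < 1).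
  { rewrite <- cos_0. apply cos_decreasing_1; pose proof PI_RGT_0; lra. }
  assert (Hh0 : 0 < cos (d z z' / 2)) by (apply cos_gt_0; pose proof PI_RGT_0; lra).
  assert (HcL : 0 < cos L) by (apply cos_gt_0; pose proof PI_RGT_0; lra).
  pose proof (cos_le_mono L Lm ltac:(lra) ltac:(lra) ltac:(pose proof PI_RGT_0; lra)).
  nra.
Qed.

Lemma AC_exists (X : Type) (d : X -> X -> R) (s : nat -> X) : CAT1_space d -> admissible d ->
  complete_metric d ->
  (exists y0 L0, is_limsup (fun n => d (s n) y0) L0 /\ L0 < PI/2) ->
  exists z Lz, is_limsup (fun n => d (s n) z) Lz /\
    (forall y Ly, is_limsup (fun n => d (s n) y) Ly -> Lz <= Ly).
Proof.
  intros HC Ha Hcomp [y0 [L0 [H0 HL0]]].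
  pose proof (dbound X d (proj1 HC) Ha) as Hb.
  pose proof PI_RGT_0 as Hpi.
  set (E := fun r => exists y L, is_limsup (fun n => d (s n) y) L /\ r = cos L).
  assert (HE : bound E).
  { exists 1. intros r [y [L [_ ->]]]. apply COS_bound. }
  destruct (completeness E HE (ex_intro _ (cos L0) (ex_intro _ y0 (ex_intro _ L0 (conj H0 eq_refl))))) as [k [Hk1 Hk2]].
  assert (Hk0 : cos L0 <= k) by (apply Hk1; exists y0, L0; auto).
  pose proof (limsup_range _ _ _ (fun n => Hb _ _) H0).
  assert (HcL0 : 0 < cos L0) by (apply cos_gt_0; lra).
  assert (Happ : forall j : nat, exists y L, is_limsup (fun n => d (s n) y) L /\ cos L > k - / INR (S j)).
  { intros j. apply NNPP. intros Hn.
    assert (is_upper_bound E (k - / INR (S j))).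
    { intros r [y [L [HyL ->]]]. destruct (Rle_or_lt (cos L) (k - / INR (S j))); auto.
      exfalso. apply Hn. exists y, L. split; auto. }
    apply Hk2 in H1. assert (0 < / INR (S j)) by (apply Rinv_0_lt_compat, lt_0_INR; lia). lra. }
  assert (Hf : forall j : nat, {yL : X * R | is_limsup (fun n => d (s n) (fst yL)) (snd yL) /\ cos (snd yL) > k - / INR (S j)}).
  { intros j. apply constructive_indefinite_description.
    destruct (Happ j) as [y [L HyL]]. exists (y, L). exact HyL. }
  set (Y := fun j => fst (proj1_sig (Hf j))).
  set (LY := fun j => snd (proj1_sig (Hf j))).
  assert (HY : forall j, is_limsup (fun n => d (s n) (Y j)) (LY j) /\ cos (LY j) > k - / INR (S j)).
  { intros j. unfold Y, LY. destruct (Hf j) as [yl Hyl]. exact Hyl. }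
  assert (HYk : forall j, cos (LY j) <= k).
  { intros j. apply Hk1. exists (Y j), (LY j). split; [apply HY|auto]. }
  assert (Hcauchy : forall eps, eps > 0 -> exists N, forall m n, (m >= N)%nat -> (n >= N)%nat ->
        d (Y m) (Y n) < eps).
  { intros eps He.
    destruct (arch_nat (12 / (k * (eps * eps)))) as [N HN].
    exists N. intros m n Hm Hn.
    destruct (classic (Y m = Y n)) as [Heq|Hne].
    { rewrite Heq. destruct HC as [[_ [Hz _]] _]. rewrite (proj2 (Hz (Y n) (Y n)) eq_refl). lra. }
    destruct (MidL X d s HC Ha (Y m) (Y n) Hne) as [mm Hmm].
    destruct (limsup_exists (fun i => d (s i) mm) (PI/2) (fun i => Hb _ _)) as [Lm HLm].
    specialize (Hmm (LY m) (LY n) Lm (proj1 (HY m)) (proj1 (HY n)) HLm).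
    assert (Hmk : cos Lm <= k) by (apply Hk1; exists mm, Lm; auto).
    destruct (HY m) as [_ Hm']. destruct (HY n) as [_ Hn'].
    assert (HiN : forall j, (j >= N)%nat -> / INR (S j) <= / INR (S N)).
    { intros j Hj. apply Rinv_le_contravar. apply lt_0_INR; lia. apply le_INR; lia. }
    pose proof (HiN m Hm). pose proof (HiN n Hn).
    set (a := d (Y m) (Y n)) in *.
    pose proof (Hb (Y m) (Y n)) as Hba. fold a in Hba.
    assert (Hh : 0 < cos (a/2)) by (apply cos_gt_0; lra).
    assert (Hk : 0 < k) by lra.
    assert (Hle : k * (2 * cos (a/2)) >= 2 * k - 2 / INR (S N)).
    { assert (cos Lm * (2 * cos (a / 2)) <= k * (2 * cos (a/2))) by (apply Rmult_le_compat_r; lra).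
      unfold Rdiv. lra. }
    assert (H1c : 1 - cos (a/2) <= / (k * INR (S N))).
    { rewrite Rinv_mult. apply (Rmult_le_reg_l k); [lra|].
      replace (k * (/ k * / INR (S N))) with (/ INR (S N)) by (field; split; [apply not_0_INR; lia|lra]).
      unfold Rdiv in Hle. lra. }
    pose proof (one_minus_cos (a/2) ltac:(lra)).
    assert (HSN : INR (S N) > 12 / (k * (eps * eps))) by (rewrite S_INR; lra).
    assert (Hpos : 0 < INR (S N)) by (apply lt_0_INR; lia).
    assert (Hee : 0 < eps * eps) by nra.
    assert (Hkee : 0 < k * (eps * eps)) by (apply Rmult_lt_0_compat; lra).
    assert (Hkn : 0 < k * INR (S N)) by (apply Rmult_lt_0_compat; lra).
    assert (Hq : / (k * INR (S N)) < eps * eps / 12).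
    { apply (Rmult_lt_reg_l (k * INR (S N) * 12)). lra.
      replace (k * INR (S N) * 12 * / (k * INR (S N))) with 12 by (field; lra).
      apply (Rmult_lt_reg_l (/ (k * (eps * eps)))). apply Rinv_0_lt_compat; lra.
      replace (/ (k * (eps * eps)) * 12) with (12 / (k * (eps * eps))) by (field; lra).
      replace (/ (k * (eps * eps)) * (k * INR (S N) * 12 * (eps * eps / 12))) with (INR (S N)) by (field; lra).
      lra. }
    assert (a * a < eps * eps) by nra.
    destruct (Rle_or_lt eps a); auto. nra. }
  destruct (Hcomp Y Hcauchy) as [l Hl].
  destruct (limsup_exists (fun n => d (s n) l) (PI/2) (fun n => Hb _ _)) as [Ll HLl].
  exists l, Ll. split; auto.
  assert (Hkl : cos Ll >= k).
  { destruct (Rle_or_lt k (cos Ll)); [lra|]. exfalso.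
    set (e := (k - cos Ll) / 3).
    destruct (Hl e ltac:(unfold e; lra)) as [N1 HN1].
    destruct (arch_nat (/ e)) as [N2 HN2].
    set (j := (N1 + N2)%nat).
    pose proof (HN1 j ltac:(unfold j; lia)).
    pose proof (LipL X d s (proj1 HC) Ha (Y j) l (LY j) Ll (proj1 (HY j)) HLl).
    destruct (HY j) as [_ Hj].
    assert (/ INR (S j) < e).
    { assert (0 < e) by (unfold e; lra).
      assert (INR N2 <= INR (S j)) by (apply le_INR; unfold j; lia).
      rewrite <- (Rinv_inv e). apply Rinv_lt_contravar. apply Rmult_lt_0_compat; [apply Rinv_0_lt_compat; lra|apply lt_0_INR; lia].
      lra. }
    idtac.
    unfold e in *. lra. }
  intros y Ly HLy.
  assert (cos Ly <= k) by (apply Hk1; exists y, Ly; auto).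
  pose proof (limsup_range _ _ _ (fun n => Hb _ _) HLy).
  pose proof (limsup_range _ _ _ (fun n => Hb _ _) HLl).
  apply (cos_le_inv Ly Ll); lra.
Qed.

Lemma FV_fix (X : Type) (d : X -> X -> R) (T : X -> X) : is_metric d -> admissible d ->
  firmly_vicinal d T -> forall q, T q = q -> forall x,
  cos (d (T x) x) * cos (d (T x) q) >= cos (d x q).
Proof.
  intros Hm Ha HF q Hq x. pose proof (HF x q) as H. cbv zeta in H.
  destruct Hm as [Hp [H0 [Hs Ht]]].
  rewrite Hq in H. rewrite (proj2 (H0 q q) eq_refl), cos_0 in H. rewrite (Hs q x) in H.
  set (C := cos (d (T x) x)) in *. set (P := cos (d (T x) q)) in *.
  assert (1 + C^2 > 0) by nra.
  apply Rle_ge. apply (Rmult_le_reg_l (1 + C^2)); [lra|]. nra.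
Qed.

Lemma pw_demi (X : Type) (d : X -> X -> R) (T : X -> X) : is_metric d -> admissible d ->
  firmly_vicinal d T -> forall u z, d (T u) u <= 1/2 ->
  cos (d u (T z)) >= cos (d u z) - 10 * d (T u) u.
Proof.
  intros Hm Ha HF u z Hdl. pose proof (HF u z) as H. cbv zeta in H.
  pose proof (dbound X d Hm Ha) as Hb.
  destruct Hm as [Hp [H0 [Hs Ht]]].
  assert (Hdl0 : 0 <= d (T u) u) by apply Hp.
  set (dl := d (T u) u) in *.
  set (Cx := cos dl) in *. set (Cy := cos (d (T z) z)) in *.
  set (P := cos (d (T u) (T z))) in *. set (Q := cos (d (T u) z)) in *.
  set (R0 := cos (d (T z) u)) in *. set (A := cos (d u z)).
  pose proof PI_RGT_0.
  assert (HCx : 1/2 <= Cx <= 1).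
  { split; [|apply COS_bound]. pose proof (cos_lip' 0 dl). rewrite cos_0 in H2.
    replace (0 - dl) with (- dl) in H2 by ring. rewrite Rabs_Ropp, Rabs_pos_eq in H2 by (apply Hp). unfold Cx; lra. }
  assert (HCy : 0 <= Cy <= 1).
  { split; [|apply COS_bound]. unfold Cy. pose proof (Hb (T z) z). apply cos_ge_0; lra. }
  assert (HP : 0 <= P <= 1).
  { split; [|apply COS_bound]. unfold P. pose proof (Hb (T u) (T z)). apply cos_ge_0; lra. }
  assert (HR0 : 0 <= R0 <= 1).
  { split; [|apply COS_bound]. unfold R0. pose proof (Hb (T z) u). apply cos_ge_0; lra. }
  assert (HPR : P <= R0 + dl).
  { unfold P, R0. pose proof (cos_lip' (d (T u) (T z)) (d (T z) u)).
    assert (Rabs (d (T u) (T z) - d (T z) u) <= dl).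
    { apply Rabs_le. pose proof (Ht (T z) (T u) u). pose proof (Ht (T u) u (T z)).
      pose proof (Hs (T z) (T u)). pose proof (Hs u (T z)). pose proof (Hs (T u) u). unfold dl. lra. }
    lra. }
  assert (HQA : Q >= A - dl).
  { unfold Q, A. pose proof (cos_lip' (d u z) (d (T u) z)).
    assert (Rabs (d u z - d (T u) z) <= dl).
    { apply Rabs_le. pose proof (Ht u (T u) z). pose proof (Ht (T u) u z).
      pose proof (Hs u (T u)). unfold dl. lra. }
    lra. }
  assert (HK : Cx^2 * (1 + Cy^2) * (Cy * P - Q) >= - 2 * dl).
  { assert (Cy ^ 2 * (1 + Cx ^ 2) * (Cx * P - R0) <= 2 * dl).
    { assert (Cx * P - R0 <= dl) by nra.
      assert (0 <= Cy^2 <= 1) by (split; nra). assert (1 <= 1 + Cx^2 <= 2) by (split; nra).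
      assert (0 <= Cy^2 * (1 + Cx^2) <= 2) by (split; nra).
      destruct (Rle_or_lt 0 (Cx * P - R0)); [|nra].
      pose proof (Hp (T u) u). fold dl in H5. nra. }
    nra. }
  assert (Hm1 : Cy * P - Q >= - 8 * dl).
  { pose proof (Hp (T u) u). fold dl in H2.
    assert (1/4 <= Cx^2 * (1 + Cy^2)) by nra.
    destruct (Rle_or_lt 0 (Cy * P - Q)); [nra|].
    nra. }
  rewrite (Hs u (T z)). fold R0. nra.
Qed.

Lemma strict_ge (phi : nat -> nat) : (forall i, (phi i < phi (S i))%nat) -> forall i, (i <= phi i)%nat.
Proof. intros H i. induction i; [lia|]. specialize (H i). lia. Qed.

Lemma Fejer (X : Type) (d : X -> X -> R) (T : X -> X) : is_metric d -> admissible d ->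
  firmly_vicinal d T -> forall q, T q = q -> forall x,
  exists L, L <= d x q /\ (forall n, L <= d (Nat.iter n T x) q) /\
  (forall eps, eps > 0 -> exists N, forall n, (n >= N)%nat -> d (Nat.iter n T x) q < L + eps).
Proof.
  intros Hm Ha HF q Hq x.
  pose proof (dbound X d Hm Ha) as Hb. pose proof PI_RGT_0.
  assert (Hdec : forall n, d (Nat.iter (S n) T x) q <= d (Nat.iter n T x) q).
  { intros n. simpl. set (u := Nat.iter n T x).
    pose proof (FV_fix X d T Hm Ha HF q Hq u).
    pose proof (Hb (T u) u). pose proof (Hb (T u) q). pose proof (Hb u q).
    assert (0 <= cos (d (T u) u) <= 1) by (split; [apply cos_ge_0; lra|apply COS_bound]).
    assert (0 <= cos (d (T u) q)) by (apply cos_ge_0; lra).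
    apply (cos_le_inv (d u q) (d (T u) q)); try lra. nra. }
  assert (Hdec' : forall n k, d (Nat.iter (k + n) T x) q <= d (Nat.iter n T x) q).
  { intros n k. induction k; simpl; [lra|]. pose proof (Hdec (k + n)%nat). simpl in H0. lra. }
  destruct (limsup_exists (fun n => d (Nat.iter n T x) q) (PI/2) (fun n => Hb _ _)) as [L HL].
  assert (Hlow : forall n, L <= d (Nat.iter n T x) q).
  { intros n. destruct (Rle_or_lt L (d (Nat.iter n T x) q)); auto. exfalso.
    destruct (HL (L - d (Nat.iter n T x) q) ltac:(lra)) as [_ HF2].
    destruct (HF2 n) as [m [Hmn Hm']].
    pose proof (Hdec' n (m - n)%nat). replace (m - n + n)%nat with m in H1 by lia. lra. }
  exists L. split; [apply (Hlow 0%nat)|]. split; auto.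
  intros eps He. destruct (HL eps He) as [[N HN] _]. exists N. exact HN.
Qed.

Lemma Fejer_sub (X : Type) (d : X -> X -> R) (T : X -> X) (x q : X) L :
  (forall n, L <= d (Nat.iter n T x) q) ->
  (forall eps, eps > 0 -> exists N, forall n, (n >= N)%nat -> d (Nat.iter n T x) q < L + eps) ->
  forall phi, (forall i, (phi i < phi (S i))%nat) ->
  is_limsup (fun i => d (Nat.iter (phi i) T x) q) L.
Proof.
  intros Hlow Hup phi Hphi eps He. pose proof (strict_ge phi Hphi). split.
  - destruct (Hup eps He) as [N HN]. exists N. intros n Hn. apply HN. specialize (H n). lia.
  - intros N. exists N. split; [lia|]. specialize (Hlow (phi N)). lra.
Qed.

Lemma regular (X : Type) (d : X -> X -> R) (T : X -> X) : is_metric d -> admissible d ->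
  firmly_vicinal d T -> forall q, T q = q -> forall x,
  forall eps, eps > 0 -> exists N, forall n, (n >= N)%nat ->
    d (T (Nat.iter n T x)) (Nat.iter n T x) < eps.
Proof.
  intros Hm Ha HF q Hq x eps He.
  pose proof (dbound X d Hm Ha) as Hb. pose proof PI_RGT_0.
  destruct (Fejer X d T Hm Ha HF q Hq x) as [L [HL0 [Hlow Hup]]].
  assert (HL : 0 <= L <= d x q).
  { split; auto. destruct (Rle_or_lt 0 L); auto.
    destruct (Hup (- L) ltac:(lra)) as [N HN]. specialize (HN N (le_n N)).
    pose proof (Hb (Nat.iter N T x) q). lra. }
  pose proof (Ha x q). pose proof PI2_1.
  set (g := cos L).
  assert (Hg : 0 < g <= 1) by (split; [apply cos_gt_0; lra|apply COS_bound]).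
  set (e := Rmin eps 1).
  assert (He' : 0 < e /\ e <= eps /\ e <= 1) by (unfold e; split; [apply Rmin_glb_lt|split;[apply Rmin_l|apply Rmin_r]]; lra).
  set (eta := g * (e * e) / 6).
  assert (Hee : 0 < e * e <= 1) by (split; nra).
  assert (Hgee : 0 < g * (e * e) <= 1) by (split; nra).
  assert (Heta : 0 < eta <= 1/6) by (unfold eta; split; lra).
  destruct (Hup eta ltac:(lra)) as [N HN]. exists N. intros n Hn.
  set (u := Nat.iter n T x).
  pose proof (FV_fix X d T Hm Ha HF q Hq u) as HFV.
  assert (Hsu : Nat.iter (S n) T x = T u) by reflexivity.
  pose proof (Hlow (S n)) as Hl1. rewrite Hsu in Hl1.
  pose proof (HN n Hn) as Hun. fold u in Hun.
  pose proof (Hb u q). pose proof (Hb (T u) q). pose proof (Hb (T u) u).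
  assert (HC0 : 0 <= cos (d (T u) u)) by (apply cos_ge_0; lra).
  assert (Hc1 : cos (d (T u) q) <= g) by (apply cos_le_mono; lra).
  assert (Hcn : cos (d u q) >= g - eta).
  { pose proof (cos_le_mono (d u q) (L + eta) ltac:(lra) ltac:(lra) ltac:(lra)).
    pose proof (cos_lip' L (L + eta)) as Hl. replace (L - (L + eta)) with (- eta) in Hl by ring.
    rewrite Rabs_Ropp, Rabs_pos_eq in Hl by lra. unfold g. lra. }
  assert (HCg : cos (d (T u) u) * g >= g - eta) by nra.
  assert (H1c : 1 - cos (d (T u) u) <= (e * e) / 6).
  { apply (Rmult_le_reg_l g); [lra|]. unfold eta in HCg. nra. }
  pose proof (one_minus_cos (d (T u) u) ltac:(lra)).
  assert (d (T u) u * d (T u) u < e * e) by nra.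
  destruct (Rle_or_lt e (d (T u) u)); [nra|lra].
Qed.

Lemma limsup_unique (a : nat -> R) L1 L2 : is_limsup a L1 -> is_limsup a L2 -> L1 = L2.
Proof.
  intros H1 H2.
  assert (forall A B, is_limsup a A -> is_limsup a B -> A <= B).
  { intros A B HA HB. destruct (Rle_or_lt A B); auto. exfalso.
    destruct (HB ((A - B)/2) ltac:(lra)) as [[N HN] _].
    destruct (HA ((A - B)/2) ltac:(lra)) as [_ HF]. destruct (HF N) as [n [Hn Hn']].
    specialize (HN n Hn). lra. }
  pose proof (H _ _ H1 H2). pose proof (H _ _ H2 H1). lra.
Qed.

Lemma demi (X : Type) (d : X -> X -> R) (T : X -> X) (s : nat -> X) : is_metric d -> admissible d ->
  firmly_vicinal d T ->
  (forall eps, eps > 0 -> exists N, forall n, (n >= N)%nat -> d (T (s n)) (s n) < eps) ->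
  forall z Lz LTz, is_limsup (fun n => d (s n) z) Lz -> is_limsup (fun n => d (s n) (T z)) LTz ->
  cos LTz >= cos Lz.
Proof.
  intros Hm Ha HF Hreg z Lz LTz Hz HTz.
  pose proof (dbound X d Hm Ha) as Hb.
  apply (Lconclude _ LTz _ (fun n => Hb _ _) HTz).
  intros eps He.
  destruct (Lcos1 _ Lz (fun n => Hb _ _) Hz (eps/2) ltac:(lra)) as [N1 HN1].
  destruct (Hreg (Rmin (1/2) (eps/20)) ltac:(apply Rmin_glb_lt; lra)) as [N2 HN2].
  exists (N1 + N2)%nat. intros n Hn. specialize (HN1 n ltac:(lia)). specialize (HN2 n ltac:(lia)).
  pose proof (Rmin_l (1/2) (eps/20)). pose proof (Rmin_r (1/2) (eps/20)).
  pose proof (pw_demi X d T Hm Ha HF (s n) z ltac:(lra)). simpl in *. lra.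
Qed.

Lemma AC_fixed (X : Type) (d : X -> X -> R) (T : X -> X) (s : nat -> X) : CAT1_space d -> admissible d ->
  firmly_vicinal d T ->
  (forall eps, eps > 0 -> exists N, forall n, (n >= N)%nat -> d (T (s n)) (s n) < eps) ->
  forall z Lz, is_limsup (fun n => d (s n) z) Lz -> Lz < PI/2 ->
  (forall y Ly, is_limsup (fun n => d (s n) y) Ly -> Lz <= Ly) -> T z = z.
Proof.
  intros HC Ha HF Hreg z Lz Hz HL Hmin.
  pose proof (dbound X d (proj1 HC) Ha) as Hb.
  destruct (limsup_exists (fun n => d (s n) (T z)) (PI/2) (fun n => Hb _ _)) as [LT HLT].
  pose proof (demi X d T s (proj1 HC) Ha HF Hreg z Lz LT Hz HLT).
  pose proof (limsup_range _ _ _ (fun n => Hb _ _) HLT).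
  pose proof (limsup_range _ _ _ (fun n => Hb _ _) Hz).
  pose proof PI_RGT_0.
  assert (LT <= Lz) by (apply (cos_le_inv Lz LT); lra).
  pose proof (Hmin _ _ HLT).
  assert (LT = Lz) by lra. subst LT.
  symmetry. apply (AC_unique X d s HC Ha z (T z) Lz Hz HLT HL Hmin).
Qed.

Theorem theorem4p5 (X : Type) (d : X -> X -> R) (T : X -> X) :
  CAT1_space d -> admissible d -> complete_metric d ->
  firmly_vicinal d T ->
  (exists p, T p = p) ->
  forall x : X, exists p, T p = p /\ Delta_converges d (fun n => Nat.iter n T x) p.
Proof.
  intros HC Ha Hc HF [q Hq] x.
  pose proof (proj1 HC) as Hm.
  assert (Hid : forall i : nat, ((fun i : nat => i) i < (fun i : nat => i) (S i))%nat) by (intros; simpl; lia).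
  assert (Hregsub : forall phi : nat -> nat, (forall i, (phi i < phi (S i))%nat) ->
    forall eps, eps > 0 -> exists N, forall i, (i >= N)%nat ->
      d (T (Nat.iter (phi i) T x)) (Nat.iter (phi i) T x) < eps).
  { intros phi Hphi eps He. destruct (regular X d T Hm Ha HF q Hq x eps He) as [N HN].
    exists N. intros i Hi. apply HN. pose proof (strict_ge phi Hphi i). lia. }
  destruct (Fejer X d T Hm Ha HF q Hq x) as [Lq [HLq [Hlq Huq]]].
  pose proof (Ha x q) as Hxq.
  destruct (AC_exists X d (fun n => Nat.iter n T x) HC Ha Hc) as [p [Lp [HLp Hpmin]]].
  { exists q, Lq. split; [exact (Fejer_sub X d T x q Lq Hlq Huq (fun i => i) Hid)|lra]. }
  assert (HLpq : Lp <= Lq) by (exact (Hpmin q Lq (Fejer_sub X d T x q Lq Hlq Huq (fun i => i) Hid))).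
  assert (Hpfix : T p = p).
  { apply (AC_fixed X d T (fun n => Nat.iter n T x) HC Ha HF (Hregsub (fun i => i) Hid) p Lp HLp ltac:(lra) Hpmin). }
  exists p. split; auto.
  intros phi Hphi z.
  destruct (Fejer X d T Hm Ha HF p Hpfix x) as [rp [Hrp [Hlp Hup]]].
  pose proof (Fejer_sub X d T x p rp Hlp Hup phi Hphi) as Hpsub.
  pose proof (Fejer_sub X d T x p rp Hlp Hup (fun i => i) Hid) as Hpwhole.
  assert (Lp = rp) by (apply (limsup_unique _ _ _ HLp Hpwhole)). subst Lp.
  destruct (AC_exists X d (fun i => Nat.iter (phi i) T x) HC Ha Hc) as [w [Lw [HLw Hwmin]]].
  { exists q, Lq. split; [exact (Fejer_sub X d T x q Lq Hlq Huq phi Hphi)|lra]. }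
  assert (HLwq : Lw <= Lq) by (exact (Hwmin q Lq (Fejer_sub X d T x q Lq Hlq Huq phi Hphi))).
  assert (Hwfix : T w = w).
  { apply (AC_fixed X d T (fun i => Nat.iter (phi i) T x) HC Ha HF (Hregsub phi Hphi) w Lw HLw ltac:(lra) Hwmin). }
  destruct (Fejer X d T Hm Ha HF w Hwfix x) as [rw [Hrw [Hlw Huw]]].
  pose proof (Fejer_sub X d T x w rw Hlw Huw phi Hphi) as Hwsub.
  pose proof (Fejer_sub X d T x w rw Hlw Huw (fun i => i) Hid) as Hwwhole.
  assert (Lw = rw) by (apply (limsup_unique _ _ _ HLw Hwsub)). subst Lw.
  pose proof (Hpmin w rw Hwwhole).
  pose proof (Hwmin p rp Hpsub).
  assert (rp = rw) by lra. subst rw.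
  unfold in_AC. split.
  - intros [Lz [HLz Hzmin]].
    pose proof (Hzmin p rp Hpsub). pose proof (Hwmin z Lz HLz).
    assert (Lz = rp) by lra. subst Lz.
    pose proof (AC_unique X d (fun i => Nat.iter (phi i) T x) HC Ha z w rp HLz Hwsub ltac:(lra) Hwmin).
    pose proof (AC_unique X d (fun i => Nat.iter (phi i) T x) HC Ha p w rp Hpsub Hwsub ltac:(lra) Hwmin).
    congruence.
  - intros ->. exists rp. split; auto.
Qed.
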